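(* Let $\delta>0$, $K\ge 2$, and let $\Lambda_1,\ldots,\Lambda_K\subset\mathbb{C}$ be regular QAM constellations with zero mean and minimum distances $d_{\min}(\Lambda_k)=\delta$ for all $k\in\{1,\ldots,K\}$. Then the superimposed constellation $$\Lambda=\Lambda_1+\sum_{k=2}^{K}2^{\frac{\sum_{i=1}^{k-1}\log|\Lambda_i|}{2}}\Lambda_k=\Big\{x_1+\sum_{k=2}^K 2^{\frac{\sum_{i=1}^{k-1}\log|\Lambda_i|}{2}}x_k : x_k\in\Lambda_k\Big\}$$ is a regular QAM with zero mean, $d_{\min}(\Lambda)=\delta$, and cardinality $|\Lambda|=\prod_{k=1}^K|\Lambda_k|$.
   Context: Logarithms are base 2, so $2^{\frac{\sum_{i<k}\log|\Lambda_i|}{2}}=\sqrt{\prod_{i<k}|\Lambda_i|}$. A regular QAM with cardinality $L^2$ ($L\ge 2$ an integer) and minimum distance $\delta$ is the set $\{(a+\mathrm{i}b)\delta : a,b\in\{-\tfrac{L-1}{2},-\tfrac{L-1}{2}+1,\ldots,\tfrac{L-1}{2}\}\}\subset\mathbb{C}$. The minimum distance $d_{\min}(\Lambda)$ is the smallest Euclidean distance between two distinct points of $\Lambda$. *)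

(* Defs.v *)
From HB Require Import structures.
From mathcomp Require Import all_boot all_order all_algebra.
From mathcomp Require Import finmap.
From mathcomp Require Import complex.
Set Implicit Arguments. Unset Strict Implicit. Unset Printing Implicit Defensive.
Import Order.TTheory GRing.Theory Num.Theory.
Local Open Scope ring_scope.
Local Open Scope fset_scope.
Local Open Scope complex_scope.

Definition cdist (R : rcfType) (x y : R[i]) : R := Normc.normc (x - y).

(* The regular QAM of cardinality L^2 with minimum distance delta:
   { (a + i b) delta : a, b in {-(L-1)/2, ..., (L-1)/2} }.
   Here a = u - (L-1)/2 with u in {0,..,L-1} (iota 0 L). *)
Definition QAM (R : rcfType) (L : nat) (delta : R) : {fset R[i]} :=
  [fset (Complex ((u%:R - (L%:R - 1) / 2) * delta)
                 ((v%:R - (L%:R - 1) / 2) * delta) : R[i])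
     | u in iota 0 L, v in iota 0 L].

Definition is_regular_QAM (R : rcfType) (A : {fset R[i]}) : Prop :=
  exists (L : nat) (delta : R), (2 <= L)%N /\ 0 < delta /\ A = QAM L delta.

Definition cmean (R : rcfType) (A : {fset R[i]}) : R[i] :=
  (\sum_(x <- A) x) / (#|` A|)%:R.

Definition is_dmin (R : rcfType) (A : {fset R[i]}) (d : R) : Prop :=
  (exists x y, [/\ x \in A, y \in A, x != y & cdist x y = d]) /\
  (forall x y, x \in A -> y \in A -> x != y -> d <= cdist x y).

(* scaling factor of the k-th layer:
   2^{(sum_{i=1}^{k-1} log2 |Lambda_i|)/2} = sqrt (prod_{i=1}^{k-1} |Lambda_i|) *)
Definition layer_scale (R : rcfType) (Lam : nat -> {fset R[i]}) (k : nat) : R[i] :=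
  (Num.sqrt ((\prod_(1 <= i < k) #|` Lam i|)%N%:R : R))%:C.

(* superimposed constellation of layers 1..K:
   superpose Lam 1 = Lam 1,
   superpose Lam (k+1) = superpose Lam k + scale_(k+1) * Lam (k+1),
   so superpose Lam K = { x_1 + sum_{k=2}^K scale_k x_k : x_k in Lam k }. *)
Fixpoint superpose (R : rcfType) (Lam : nat -> {fset R[i]}) (K : nat) : {fset R[i]} :=
  match K with
  | 0 => fset0
  | 1 => Lam 1%N
  | k.+1 => [fset (x + layer_scale Lam k.+1 * y)%R
               | x in superpose Lam k, y in Lam k.+1]
  end.

(* Main.v *)
Require Import Defs.
From HB Require Import structures.
From mathcomp Require Import all_boot all_order all_algebra.
From mathcomp Require Import finmap.
From mathcomp Require Import complex.
From mathcomp Require Import ring lra zify.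
Import Order.TTheory GRing.Theory Num.Theory.
Local Open Scope ring_scope.
Local Open Scope fset_scope.
Local Open Scope complex_scope.
Set Implicit Arguments. Unset Strict Implicit.
Local Open Scope ring_scope.

Section S.
Variable R : rcfType.
Implicit Types d : R.

Definition q (L : nat) (d : R) (u v : nat) : R[i] :=
  Complex ((u%:R - (L%:R - 1) / 2) * d) ((v%:R - (L%:R - 1) / 2) * d).

Lemma memQAM L d z : reflect (exists u v, [/\ (u < L)%N, (v < L)%N & z = q L d u v])
   (z \in QAM L d).
Proof.
apply: (iffP (imfset2P _ _ _ _ _)).
  move=> [u]; rewrite /= mem_iota => /andP[_ uL] [v]; rewrite /= mem_iota => /andP[_ vL] ->.
  by exists u, v.
move=> [u [v [uL vL ->]]]; exists u; first by rewrite /= mem_iota.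
by exists v; first by rewrite /= mem_iota.
Qed.

Lemma q_inj L d u v u' v' : d != 0 -> q L d u v = q L d u' v' -> u = u' /\ v = v'.
Proof.
move=> d0 [/(mulIf d0)/addIr/eqP h1 /(mulIf d0)/addIr/eqP h2].
by move: h1 h2; rewrite !eqr_nat => /eqP -> /eqP ->.
Qed.

Lemma perm_enum_iota (p : finmempred nat) L : (forall x, in_mem x p = (x \in iota 0 L)) ->
  perm_eq (enum_finmem p) (iota 0 L).
Proof.
move=> h; apply: uniq_perm; rewrite ?enum_finmem_uniq ?iota_uniq // => x.
by rewrite enum_finmemE -h.
Qed.

Lemma sumQAM (V : nmodType) L d (F : R[i] -> V) : d != 0 ->
  \sum_(z <- QAM L d) F z = \sum_(u <- iota 0 L) \sum_(v <- iota 0 L) F (q L d u v).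
Proof.
move=> d0; rewrite big_imfset2 /=; last first.
  by move=> [u v] [u' v'] _ _ /= /(q_inj d0) [-> ->].
by rewrite undup_id ?iota_uniq.
Qed.


Lemma cardQAM L d : d != 0 -> #|` QAM L d| = (L * L)%N.
Proof.
move=> d0; rewrite card_fset_sum1 (sumQAM _ _ d0).
under eq_bigr do rewrite sum1_size size_iota.
by rewrite big_const_seq count_predT size_iota iter_addn_0.
Qed.

Lemma q_rev L d u v : (u < L)%N -> (v < L)%N ->
  q L d (0 + L - u.+1) (0 + L - v.+1) = - q L d u v.
Proof.
move=> uL vL; rewrite !add0n /q (natrB _ uL) (natrB _ vL) (mulrSr 1 u) (mulrSr 1 v).
have -> : forall a b : R, - (Complex a b) = Complex (-a) (-b) :> R[i] by [].
by congr Complex; field.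
Qed.

Lemma meanQAM L d : d != 0 -> cmean (QAM L d) = 0.
Proof.
move=> d0; rewrite /cmean.
rewrite (sumQAM _ _ d0).
set S := \sum_(u <- _) _.
suff -> : S = 0 by rewrite mul0r.
have e : iota 0 L = index_iota 0 L by rewrite /index_iota subn0.
have : S = - S.
  rewrite /S e {1}big_nat_rev /= -sumrN; apply: eq_big_nat => u /andP[_ uL].
  rewrite {1}big_nat_rev /= -sumrN; apply: eq_big_nat => v /andP[_ vL].
  by rewrite q_rev.
move/eqP; rewrite -subr_eq0 opprK -mulr2n mulrn_eq0 /= => /eqP //.
Qed.

Lemma cdist_q L d u v u' v' : cdist (q L d u v) (q L d u' v') =
  Num.sqrt (((u%:R - u'%:R) * d) ^+ 2 + ((v%:R - v'%:R) * d) ^+ 2).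
Proof.
rewrite /cdist /q.
have -> : forall a b a' b' : R, Complex a b - Complex a' b' = Complex (a - a') (b - b') :> R[i] by [].
rewrite /Normc.normc; congr (Num.sqrt (_ ^+ 2 + _ ^+ 2)); ring.
Qed.

Lemma sq_ge1 (u u' : nat) : u != u' -> 1 <= (u%:R - u'%:R : R) ^+ 2.
Proof.
move=> ne; case: (ltngtP u u') ne => // h _.
- have : (u.+1)%:R <= u'%:R :> R by rewrite ler_nat.
  rewrite (mulrSr 1 u) => h'; nra.
- have : (u'.+1)%:R <= u%:R :> R by rewrite ler_nat.
  rewrite (mulrSr 1 u') => h'; nra.
Qed.

Lemma dist_lb L d u v u' v' : 0 < d -> (u != u') || (v != v') ->
  d <= cdist (q L d u v) (q L d u' v').
Proof.
move=> d0 ne; rewrite cdist_q.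
rewrite -[X in X <= _](ger0_norm (ltW d0)) -sqrtr_sqr.
rewrite ler_sqrt; last by rewrite addr_ge0 // sqr_ge0.
have h1 : 0 <= (u%:R - u'%:R : R) ^+ 2 by rewrite sqr_ge0.
have h2 : 0 <= (v%:R - v'%:R : R) ^+ 2 by rewrite sqr_ge0.
have h : 1 <= (u%:R - u'%:R : R) ^+ 2 + (v%:R - v'%:R) ^+ 2.
  case/orP: ne => /sq_ge1 h; lra.
rewrite !exprMn -mulrDl -subr_ge0 -[X in _ - X]mul1r -mulrBl.
by apply: mulr_ge0; [rewrite subr_ge0 | rewrite sqr_ge0].
Qed.

Lemma q_neq L d u v u' v' : d != 0 -> (u != u') || (v != v') -> q L d u v != q L d u' v'.
Proof.
move=> d0 ne; apply/eqP => /(q_inj d0) [e1 e2]; move: ne; by rewrite e1 e2 !eqxx.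
Qed.

Lemma QAM_lb L d x y : 0 < d -> x \in QAM L d -> y \in QAM L d -> x != y -> d <= cdist x y.
Proof.
move=> d0 /memQAM [u [v [_ _ ->]]] /memQAM [u' [v' [_ _ ->]]] ne.
apply: dist_lb => //; apply: contraR ne; rewrite negb_or !negbK => /andP[/eqP -> /eqP ->].
by [].
Qed.

Lemma dminQAM L d : 0 < d -> (2 <= L)%N -> is_dmin (QAM L d) d.
Proof.
move=> d0 L2; split; last by move=> x y; apply: QAM_lb.
exists (q L d 0 0), (q L d 1 0); split.
- by apply/memQAM; exists 0%N, 0%N; split => //; apply: leq_trans L2.
- by apply/memQAM; exists 1%N, 0%N; split => //; apply: leq_trans L2.
- by apply: q_neq; rewrite ?(gt_eqF d0).
- rewrite cdist_q subrr mul0r expr0n /= addr0 sqrtr_sqr.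
  by rewrite sub0r mulN1r normrN ger0_norm // ltW.
Qed.

Lemma dmin_unique L d delta : 0 < d -> (2 <= L)%N -> is_dmin (QAM L d) delta -> delta = d.
Proof.
move=> d0 L2 [[x [y [hx hy ne <-]]] lb]; apply/eqP; rewrite eq_le; apply/andP; split.
  have [[x' [y' [hx' hy' ne' <-]]] _] := dminQAM d0 L2.
  by apply: lb.
exact: (QAM_lb d0 hx hy ne).
Qed.

Lemma sup_id N L d u v u' v' :
  q N d u v + (N%:R)%:C * q L d u' v' = q (N * L) d (u + N * u') (v + N * v').
Proof.
have hM : forall k a b : R, k%:C * Complex a b = Complex (k * a) (k * b) :> R[i].
  by move=> k a b; apply/eqP; rewrite eq_complex /= !mul0r subr0 addr0 !eqxx.
have hA : forall a b a' b' : R, Complex a b + Complex a' b' = Complex (a + a') (b + b') :> R[i] by [].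
rewrite /q hM hA !natrD !natrM; by congr Complex; field.
Qed.

Lemma sup_QAM N L d c : (0 < N)%N -> (0 < L)%N -> c = (N%:R)%:C ->
  [fset (x + c * y)%R | x in QAM N d, y in QAM L d] = QAM (N * L) d.
Proof.
move=> N0 L0 ->; apply/fsetP => z; apply/imfset2P/memQAM.
  move=> [x /memQAM [u [v [uN vN ->]]] [y /memQAM [u' [v' [uL vL ->]]] ->]].
  exists (u + N * u')%N, (v + N * v')%N; split; [nia | nia | by rewrite sup_id].
move=> [U [V [UL VL ->]]].
exists (q N d ((U %% N)%N) ((V %% N)%N)); first by apply/memQAM; exists ((U %% N)%N), ((V %% N)%N); rewrite !ltn_pmod.
exists (q L d ((U %/ N)%N) ((V %/ N)%N)).
  by apply/memQAM; exists ((U %/ N)%N), ((V %/ N)%N); rewrite !ltn_divLR // ![(_ * N)%N]mulnC.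
by rewrite sup_id ![(N * (_ %/ N))%N]mulnC addnC -divn_eq addnC -divn_eq.
Qed.

End S.

Lemma main_ind (R : rcfType) (delta : R) (Lam : nat -> {fset R[i]}) : 0 < delta ->
  forall K, (1 <= K)%N ->
  (forall k, (1 <= k <= K)%N -> exists L, (2 <= L)%N /\ Lam k = QAM L delta) ->
  exists N, [/\ (2 <= N)%N, superpose Lam K = QAM N delta &
                (N * N = \prod_(1 <= k < K.+1) #|` Lam k|)%N].
Proof.
move=> d0; have dn0 : delta != 0 by rewrite gt_eqF.
elim=> [//|K IH] _ H.
case: K IH H => [|K] IH H.
  have [L [L2 eL]] := H 1%N isT.
  exists L; split => //.
  by rewrite big_nat1 eL cardQAM.
have [N [N2 eN cN]] : exists N, [/\ (2 <= N)%N, superpose Lam K.+1 = QAM N delta &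
                (N * N = \prod_(1 <= k < K.+2) #|` Lam k|)%N].
  apply: IH => // k /andP[k1 kK]; apply: H; rewrite k1 /=; exact: leqW.
have [L [L2 eL]] := H K.+2 (leqnn _).
exists (N * L)%N; split.
- by rewrite (leq_trans N2) // leq_pmulr // (leq_trans _ L2).
- have -> : superpose Lam K.+2 = [fset (x + layer_scale Lam K.+2 * y)%R | x in superpose Lam K.+1, y in Lam K.+2] by [].
  rewrite eN eL; apply: sup_QAM; [exact: (leq_trans _ N2) | exact: (leq_trans _ L2) |].
  rewrite /layer_scale -cN natrM -expr2 sqrtr_sqr ger0_norm //.
- rewrite big_nat_recr //= -cN eL cardQAM //.
  by rewrite mulnACA.
Qed.

Unset Implicit Arguments.
Local Open Scope fset_scope.

Theorem lemma2 (R : rcfType) (delta : R) (K : nat) (Lam : nat -> {fset R[i]}) :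
  0 < delta -> (2 <= K)%N ->
  (forall k, (1 <= k <= K)%N ->
     [/\ is_regular_QAM (Lam k), cmean (Lam k) = 0 & is_dmin (Lam k) delta]) ->
  [/\ is_regular_QAM (superpose Lam K), cmean (superpose Lam K) = 0,
      is_dmin (superpose Lam K) delta &
      #|` superpose Lam K| = (\prod_(1 <= k < K.+1) #|` Lam k|)%N].
Proof.
move=> d0 K2 H.
have dn0 : delta != 0 by rewrite gt_eqF.
have [N [N2 eN cN]] := @main_ind R delta Lam d0 K (ltnW K2) (fun k hk =>
  match H k hk with
  | And3 (ex_intro L (ex_intro d (conj L2 (conj dpos e)))) _ hd =>
      ex_intro _ L (conj L2 (eq_trans e (f_equal (QAM L) (esym (dmin_unique dpos L2 (eq_rect _ (fun A => is_dmin A delta) hd _ e))))))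
  end).
rewrite eN; split.
- by exists N, delta.
- exact: meanQAM.
- exact: dminQAM.
- by rewrite cardQAM.
Qed.
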